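(* Let $n$ be sufficiently large, $m=\lceil n/\log^8 n\rceil$ and $p=1/(m^{1/2}\log^2 m)$. Let $H_R,H_B$ be graphs on vertex set $[m]$, let $H_R',H_B'$ be obtained from them by deleting every edge lying in a triangle, and let $\pi_R,\pi_B:[n]\to[m]$ be maps. Let $H_0$ be the graph on $[n]$ where distinct $u,v$ are adjacent iff $\{\pi_R(u),\pi_R(v)\}\in E(H_R')$ (then the edge is called red) or $\{\pi_B(u),\pi_B(v)\}\in E(H_B')$ (then called blue); an edge may be both. A pair $\{u,v\}\in\binom{[n]}{2}$ is closed by a red (resp. blue) cherry if there is $w\in[n]$ with $\{u,w\},\{v,w\}$ both red (resp. both blue) edges of $H_0$. If $H_R$ has maximum degree at most $2pm$ and $|\pi_R^{-1}(x)|\le 2n/m$ for all $x\in[m]$, then at most $n^2/\log n$ pairs in $\binom{[n]}2$ are closed by a red cherry in $H_0$. Similarly, if $H_B$ has maximum degree at most $2pm$ and $|\pi_B^{-1}(x)|\le 2n/m$ for all $x\in[m]$, then at most $n^2/\log n$ pairs are closed by a blue cherry in $H_0$.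
   Context: Logarithms are natural; $\log^k n$ means $(\log n)^k$. *)

(* Defs.v *)
From mathcomp Require Import all_boot all_order all_algebra.
From mathcomp Require Import all_classical all_reals all_analysis.
Set Implicit Arguments. Unset Strict Implicit. Unset Printing Implicit Defensive.
Import Order.TTheory GRing.Theory Num.Theory.
Local Open Scope ring_scope.

Definition is_graph (T : finType) (H : rel T) : Prop :=
  (forall x y, H x y = H y x) /\ (forall x, H x x = false).

Definition del_tri (T : finType) (H : rel T) : rel T :=
  fun x y => H x y && ~~ [exists z, H x z && H y z].

Definition degree (T : finType) (H : rel T) (x : T) : nat := #|[set y | H x y]|.

Definition m_of (R : realType) (n : nat) : nat :=
  `| Num.ceil ((n%:R : R) / (ln (n%:R : R)) ^+ 8) |%N.

Definition p_of (R : realType) (m : nat) : R :=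
  1 / (Num.sqrt (m%:R : R) * (ln (m%:R : R)) ^+ 2).

Definition col_edge (n m : nat) (Hc : rel 'I_m) (pic : 'I_n -> 'I_m) : rel 'I_n :=
  fun u v => (u != v) && del_tri Hc (pic u) (pic v).

Definition H0 (n m : nat) (HR HB : rel 'I_m) (piR piB : 'I_n -> 'I_m) : rel 'I_n :=
  fun u v => col_edge HR piR u v || col_edge HB piB u v.

(* Pairs {u,v} (encoded as u < v) closed by a cherry of the given colour. *)
Definition cherry_closed (n m : nat) (Hc : rel 'I_m) (pic : 'I_n -> 'I_m)
  : {set 'I_n * 'I_n} :=
  [set uv : 'I_n * 'I_n | (val uv.1 < val uv.2)%N &&
            [exists w, col_edge Hc pic uv.1 w && col_edge Hc pic uv.2 w]].

(* Main.v *)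
Require Import Defs.
From mathcomp Require Import all_boot all_order all_algebra.
From mathcomp Require Import all_classical all_reals all_analysis.
Import Order.TTheory GRing.Theory Num.Theory.
Local Open Scope ring_scope.
From mathcomp Require Import ring lra.

Lemma ln_le_sub1 (R : realType) (y : R) : 0 < y -> ln y <= y - 1.
Proof.
move=> y0; have := @le_ln1Dx R (y - 1).
rewrite addrCA subrr addr0; apply; lra.
Qed.

Lemma ln2_ge (R : realType) : 1/2 <= ln (2 : R).
Proof.
have := @ln_le_sub1 R (2^-1) ltac:(lra).
rewrite lnV ?posrE //; lra.
Qed.

Lemma mR_ge (R : realType) n : 0 <= (n%:R : R) / ln (n%:R) ^+ 8 ->
  (n%:R : R) / ln (n%:R) ^+ 8 <= (m_of R n)%:R.
Proof.
move=> h; rewrite /m_of natr_absz ger0_norm.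
  exact: ceil_ge.
by rewrite real_ceil_ge0 ?num_real //; lra.
Qed.

Lemma asym (R : realType) (n : nat) : (2 ^ 400 <= n)%N ->
  [/\ 200 <= ln (n%:R : R), 0 < ln ((m_of R n)%:R : R), (0 < m_of R n)%N &
   16 * ln (n%:R : R) <= ln ((m_of R n)%:R : R) ^+ 4].
Proof.
move=> hn.
have nge : (2 ^+ 400 : R) <= n%:R by rewrite -natrX ler_nat.
have n0 : 0 < (n%:R : R) by apply: lt_le_trans nge; apply: exprn_gt0.
have hL : 200 <= ln (n%:R : R).
  have : ln (2 ^+ 400 : R) <= ln n%:R by rewrite ler_ln ?posrE ?exprn_gt0.
  rewrite lnXn // -[_ *+ 400]mulr_natr; have := ln2_ge R; move=> h1 h2.
  apply: le_trans h2; clear -h1; lra.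
clear nge hn.
set L := ln (n%:R : R) in hL *.
have L0 : 0 < L by lra.
have L8 : 0 < L ^+ 8 by apply: exprn_gt0.
have x0 : 0 < (n%:R : R) / L ^+ 8 by apply: divr_gt0.
have mge := mR_ge R n (ltW x0).
have m0 : 0 < ((m_of R n)%:R : R) by apply: lt_le_trans mge.
have lnm : L - 8 * ln L <= ln ((m_of R n)%:R : R).
  have : ln ((n%:R : R) / L ^+ 8) <= ln (m_of R n)%:R by rewrite ler_ln ?posrE.
  by rewrite ln_div ?posrE // lnXn // -[_ *+ 8]mulr_natr mulrC.
have lnL : ln L <= L / 64 + 5.
  have := @ln_le_sub1 R (L / 64) ltac:(lra).
  rewrite ln_div ?posrE //.
  have : ln (64 : R) <= 6.
    have -> : (64 : R) = 2 ^+ 6 by rewrite -natrX.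
    rewrite lnXn // -[_ *+ 6]mulr_natr; have := @ln_le_sub1 R 2 ltac:(lra).
    lra.
  lra.
have hm : L / 2 <= ln ((m_of R n)%:R : R) by lra.
have lm0 : 0 < ln ((m_of R n)%:R : R) by lra.
split => //; first by rewrite -(ltr0n R).
apply: le_trans (_ : (L / 2) ^+ 4 <= _); last first.
  by apply: lerXn2r; rewrite ?nnegrE; lra.
have : 256 <= L ^+ 3.
  apply: le_trans (_ : 200 ^+ 3 <= _); first by rewrite -natrX ler_nat.
  by apply: lerXn2r; rewrite ?nnegrE; lra.
rewrite !exprS expr0 => h3; nra.
Qed.
Lemma count_nat n m (H : rel 'I_m) (pi : 'I_n -> 'I_m) :
  (#|cherry_closed H pi| <= \sum_(z : 'I_m) #|[set u | H (pi u) z]| ^ 2)%N.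
Proof.
have step : (#|cherry_closed H pi| <=
   \sum_(uv : 'I_n * 'I_n) \sum_(z : 'I_m) (H (pi uv.1) z && H (pi uv.2) z : nat))%N.
  rewrite -sum1_card big_mkcond /=; apply: leq_sum => uv _.
  case: ifP => // /setIdP [_ /existsP [w /andP [h1 h2]]].
  rewrite (bigD1 (pi w)) //=.
  move: h1 h2; rewrite /col_edge /del_tri => /andP [_ /andP [-> _]] /andP [_ /andP [-> _]].
  by [].
apply: leq_trans step _; rewrite exchange_big /=; apply: leq_sum => z _.
rewrite -mulnn -cardsX -sum1_card [X in (_ <= X)%N]big_mkcond /=; apply: leq_sum => uv _.
by rewrite !inE; case: (H _ _ && H _ _).
Qed.

Lemma Nz_bound (R : realType) n m (H : rel 'I_m) (pi : 'I_n -> 'I_m) (D F : R) z :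
  is_graph H -> (forall x, (degree H x)%:R <= D) ->
  (forall x : 'I_m, (#|[set u | pi u == x]|%:R : R) <= F) ->
  (#|[set u | H (pi u) z]|%:R : R) <= D * F.
Proof.
move=> [Hs _] hD hF.
have F0 : 0 <= F by apply: le_trans (hF z).
rewrite -sum1_card (partition_big pi (fun x => H x z)); last by move=> u; rewrite inE.
rewrite natr_sum.
apply: le_trans (_ : \sum_(x | H x z) F <= _).
  apply: ler_sum => x hx; apply: le_trans (hF x); rewrite ler_nat -sum1_card; apply: eq_leq.
  by apply: eq_bigl => u; rewrite !inE; case: (pi u =P x) => [->|]; rewrite ?hx ?andbF.
rewrite (eq_bigl (fun x => x \in [set y | H z y])); last by move=> x; rewrite inE Hs.
rewrite sumr_const -mulr_natl; apply: ler_wpM2r => //; exact: hD.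
Qed.

Lemma count_real (R : realType) n m (H : rel 'I_m) (pi : 'I_n -> 'I_m) (D F : R) :
  is_graph H -> (forall x, (degree H x)%:R <= D) ->
  (forall x : 'I_m, (#|[set u | pi u == x]|%:R : R) <= F) ->
  (#|cherry_closed H pi|%:R : R) <= m%:R * (D * F) ^+ 2.
Proof.
move=> hg hD hF.
apply: (@le_trans _ _ (((\sum_(z : 'I_m) #|[set u | H (pi u) z]| ^ 2)%N)%:R : R)).
  by rewrite ler_nat count_nat.
rewrite natr_sum.
apply: le_trans (_ : \sum_(z : 'I_m) (D * F) ^+ 2 <= _).
  apply: ler_sum => z _; rewrite natrX; apply: lerXn2r; rewrite ?nnegrE //.
    exact: (le_trans (ler0n _ _) (Nz_bound _ _ _ _ _ _ _ z hg hD hF)).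
  exact: Nz_bound hg hD hF.
by rewrite sumr_const card_ord mulr_natl.
Qed.

Lemma alg_id (R : realType) (s a N : R) : s != 0 -> a != 0 ->
  s ^+ 2 * (2 * (1 / (s * a ^+ 2)) * s ^+ 2 * (2 * N / s ^+ 2)) ^+ 2 = 16 * N ^+ 2 / a ^+ 4.
Proof. move=> hs ha; field; rewrite ?hs ?ha //. Qed.

Lemma final_alg (R : realType) (n m : nat) :
  (0 < m)%N -> 0 < ln (m%:R : R) -> 0 < ln (n%:R : R) ->
  16 * ln (n%:R : R) <= ln (m%:R : R) ^+ 4 ->
  (m%:R : R) * (2 * p_of R m * m%:R * (2 * n%:R / m%:R)) ^+ 2 <= n%:R ^+ 2 / ln n%:R.
Proof.
move=> m0 a0 L0 h.
rewrite /p_of.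
have mR : 0 < (m%:R : R) by rewrite ltr0n.
have s0 : 0 < Num.sqrt (m%:R : R) by rewrite sqrtr_gt0.
have ss : Num.sqrt (m%:R : R) ^+ 2 = m%:R by rewrite sqr_sqrtr // ltW.
set a := ln (m%:R : R) in a0 h *; set L := ln (n%:R : R) in L0 h *.
set s := Num.sqrt (m%:R : R) in s0 ss *.
rewrite -ss.
rewrite alg_id; last 2 first.
- by rewrite gt_eqF.
- by rewrite gt_eqF.
rewrite ler_pdivrMr ?exprn_gt0 // mulrAC ler_pdivlMr //.
rewrite mulrAC [X in _ <= X]mulrC; apply: ler_wpM2r; first exact: exprn_ge0.
exact: h.
Qed.

Theorem lemma5p1 (R : realType) :
  exists N : nat, forall n : nat, (N <= n)%N ->
  forall m : nat, m = m_of R n ->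
  forall (HR HB : rel 'I_m) (piR piB : 'I_n -> 'I_m),
    is_graph HR -> is_graph HB ->
    ((forall x, (degree HR x)%:R <= 2 * p_of R m * m%:R) ->
     (forall x : 'I_m, (#|[set u | piR u == x]|%:R : R) <= 2 * n%:R / m%:R) ->
     (#|cherry_closed HR piR|%:R : R) <= (n%:R) ^+ 2 / ln (n%:R : R))
    /\
    ((forall x, (degree HB x)%:R <= 2 * p_of R m * m%:R) ->
     (forall x : 'I_m, (#|[set u | piB u == x]|%:R : R) <= 2 * n%:R / m%:R) ->
     (#|cherry_closed HB piB|%:R : R) <= (n%:R) ^+ 2 / ln (n%:R : R)).
Proof.
exists (2 ^ 400)%N => n hn m -> HR HB piR piB gR gB.
have [hL lm0 m0 h] := asym R n hn.
have L0 : 0 < ln (n%:R : R) by apply: lt_le_trans hL.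
split => hD hF.
- apply: le_trans (count_real _ _ _ _ _ _ _ gR hD hF) _; exact: final_alg.
- apply: le_trans (count_real _ _ _ _ _ _ _ gB hD hF) _; exact: final_alg.
Qed.
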